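(* Let $n\ge1$ and let $c\in\mathfrak{S}_{n+1}$ be a Coxeter element. For every $k\in\{1,\ldots,n\}$, \[\#D_k(\boldsymbol\lambda(c))=\min\bigl(\#\{\ell\in\mathbf L_c\cup\{1\}:\ell\leqslant k\},\ \#\{r\in\mathbf R_c\cup\{n+1\}:r>k\}\bigr).\]
   Context: $s_i=(i,i+1)$; a Coxeter element of $\mathfrak{S}_{n+1}$ is a product of $s_1,\dots,s_n$, each exactly once. It is a long cycle $c=(c_1,\dots,c_m,c_{m+1},\dots,c_{n+1})$ with $c_1=1<c_2<\dots<c_m=n+1>c_{m+1}>\dots>c_{n+1}>1$; $\mathbf L_c=\{c_2,\dots,c_{m-1}\}$, $\mathbf R_c=\{c_{m+1},\dots,c_{n+1}\}$. With $\mathbf L=\mathbf L_c\cup\{1\}=\{\ell_1<\dots<\ell_p\}$ and $\mathbf R=\mathbf R_c\cup\{n+1\}$, $\boldsymbol\lambda(c)$ is the partition with parts $\#\{r\in\mathbf R:\ell_i<r\}$, $i=1,\dots,p$. For a partition $\lambda$ with Ferrers diagram $\mathrm{Fer}(\lambda)=\{(i,j):j\le\lambda_i\}$, $D_k(\lambda)=\{(i,j)\in\mathrm{Fer}(\lambda):\lambda_1+i-j=k\}$. *)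

(* Defs.v *)
From HB Require Import structures.
From mathcomp Require Import all_boot all_order all_fingroup.
Set Implicit Arguments. Unset Strict Implicit. Unset Printing Implicit Defensive.

(* Convention: S_{n+1} is {perm 'I_n.+1}; the ordinal x : 'I_n.+1 represents
   the integer x+1 in {1,...,n+1}.  So ord0 represents 1 and ord_max represents n+1. *)

Definition sgen (n i : nat) : {perm 'I_n.+1} :=
  tperm (inord i.-1 : 'I_n.+1) (inord i).

Definition coxeter (n : nat) (c : {perm 'I_n.+1}) : Prop :=
  exists s : seq nat, perm_eq s (iota 1 n) /\ c = (\prod_(i <- s) sgen n i)%g.

(* Writing c as the cycle (c_1 = 1, c_2, ..., c_{n+1}) starting at 1, the
   position of the 1-based integer i in that cycle is findex c ord0 (inord i.-1).
   L_c = {c_2,...,c_{m-1}} : the elements of {2..n} occurring strictly before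
   c_m = n+1;  R_c = {c_{m+1},...,c_{n+1}} : those occurring after n+1. *)
Definition pos_in_cycle (n : nat) (c : {perm 'I_n.+1}) (i : nat) : nat :=
  findex c ord0 (inord i.-1).

Definition in_Lc (n : nat) (c : {perm 'I_n.+1}) (i : nat) : bool :=
  (1 < i <= n) && (pos_in_cycle c i < pos_in_cycle c n.+1).

Definition in_Rc (n : nat) (c : {perm 'I_n.+1}) (i : nat) : bool :=
  (1 < i <= n) && (pos_in_cycle c n.+1 < pos_in_cycle c i).

Definition Lseq (n : nat) (c : {perm 'I_n.+1}) : seq nat :=
  [seq i <- iota 1 n.+1 | (i == 1) || in_Lc c i].
Definition Rseq (n : nat) (c : {perm 'I_n.+1}) : seq nat :=
  [seq i <- iota 1 n.+1 | (i == n.+1) || in_Rc c i].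

Definition lambda (n : nat) (c : {perm 'I_n.+1}) : seq nat :=
  [seq count (fun r => l < r) (Rseq c) | l <- Lseq c].

Definition Dk (lam : seq nat) (k : nat) : seq (nat * nat) :=
  [seq ij <- [seq (i, j) | i <- iota 1 (size lam), j <- iota 1 (nth 0 lam i.-1)]
     | head 0 lam + ij.1 == k + ij.2].

(* Main.v *)
Require Import Defs.
From mathcomp Require Import all_boot all_order all_fingroup.
From mathcomp Require Import zify.
Set Implicit Arguments. Unset Strict Implicit. Unset Printing Implicit Defensive.

Lemma count_iota_eq X k s m :
  count (fun j => X == k + j) (iota s m) = (k + s <= X < k + s + m).
Proof.
elim: m s => [|m IH] s /=.
  by rewrite addn0; case: leqP => //= h; rewrite ltnNge h.
rewrite IH; case: (ltngtP X (k + s)) => h /=.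
- have -> : (k + s.+1 <= X) = false by apply/negbTE; rewrite -ltnNge; lia.
  by [].
- have -> : (k + s.+1 <= X) = true by apply/idP; lia.
  by rewrite /= addnS addSn addnS.
- have -> : (k + s.+1 <= X) = false by apply/negbTE; rewrite -ltnNge; lia.
  have -> : X < k + s + m.+1 by lia.
  by [].
Qed.


Lemma count_le_iota (Q : pred nat) m N : m <= N ->
  count (fun x => (x <= m) && Q x) (iota 1 N) = count Q (iota 1 m).
Proof.
move=> hm; rewrite -(subnKC hm) iotaD count_cat.
rewrite (@eq_in_count _ _ Q (iota 1 m)); last first.
  by move=> x; rewrite mem_iota => /andP[_ h]; have -> : x <= m by lia.
rewrite (@eq_in_count _ _ pred0 (iota (1 + m) _)); last first.
  by move=> x; rewrite mem_iota => /andP[h _]; have -> : x <= m = false by apply/negbTE; lia.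
by rewrite count_pred0 addn0.
Qed.

Lemma count_gt_iota (Q : pred nat) m N : m <= N ->
  count (fun x => (m < x) && Q x) (iota 1 N) = count Q (iota 1 N) - count Q (iota 1 m).
Proof.
move=> hm; rewrite -(subnKC hm) iotaD !count_cat.
rewrite (@eq_in_count _ _ pred0 (iota 1 m)); last first.
  by move=> x; rewrite mem_iota => /andP[_ h]; have -> : m < x = false by apply/negbTE; lia.
rewrite (@eq_in_count _ _ Q (iota (1 + m) _)); last first.
  by move=> x; rewrite mem_iota => /andP[h _]; have -> : m < x by lia.
by rewrite count_pred0 add0n addKn.
Qed.

Lemma count_iota_mono (Q : pred nat) m m' : m <= m' ->
  count Q (iota 1 m) <= count Q (iota 1 m').
Proof. by move=> h; rewrite -(subnKC h) iotaD count_cat leq_addr. Qed.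

Lemma nth_filter_iota (P : pred nat) s m t :
  t < size (filter P (iota s m)) ->
  let l := nth 0 (filter P (iota s m)) t in
  [/\ P l, s <= l, l < s + m & count P (iota s (l - s)) = t].
Proof.
elim: m s t => [|m IH] s t //=.
case: ifP => Ps /=.
  case: t => [|t] /= ht.
    by rewrite Ps subnn leqnn; split => //; lia.
  have [h1 h2 h3 h4] := IH s.+1 t ht.
  set l := nth _ _ _ in h1 h2 h3 h4 *.
  have -> : l - s = (l - s.+1).+1 by lia.
  by rewrite /= Ps h4; split => //; lia.
move=> ht; have [h1 h2 h3 h4] := IH s.+1 t ht.
set l := nth _ _ _ in h1 h2 h3 h4 *.
have -> : l - s = (l - s.+1).+1 by lia.
by rewrite /= Ps h4; split => //; lia.
Qed.

Lemma count_min a b : count (fun i => a < b + i) (iota 1 a) = minn a b.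
Proof.
elim: a => [|a IH] /=; first by rewrite min0n.
rewrite (iotaDl 1 1 a) count_map.
rewrite (@eq_count _ _ (fun i => a < b + i)); last by move=> i /=; rewrite addnS ltnS.
rewrite IH; case: (ltnP a b) => h; rewrite /=.
  have -> : a.+1 < b + 1 by lia. lia.
have -> : a.+1 < b + 1 = false by apply/negbTE; lia. lia.
Qed.

Lemma sumn_b2n (T : Type) (f : T -> bool) s : sumn [seq (f x : nat) | x <- s] = count f s.
Proof. by elim: s => //= x s ->. Qed.

Lemma comb N (P : pred nat) k : P 1 -> ~~ P N -> 1 <= k < N ->
  size (Dk [seq count (fun r => l < r) (filter (predC P) (iota 1 N)) | l <- filter P (iota 1 N)] k)
  = minn (count (fun l => l <= k) (filter P (iota 1 N))) (count (fun r => k < r) (filter (predC P) (iota 1 N))).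
Proof.
move=> P1 PN /andP[k1 kN].
set L := filter P (iota 1 N); set R := filter (predC P) (iota 1 N).
set lam := map _ L.
pose A m := count P (iota 1 m); pose B m := count (predC P) (iota 1 m).
have AB m : A m + B m = m by rewrite /A /B count_predC size_iota.
have cntL m : m <= N -> count (fun l => l <= m) L = A m.
  by move=> hm; rewrite count_filter; exact: count_le_iota.
have cntR m : m <= N -> count (fun r => m < r) R = B N - B m.
  by move=> hm; rewrite count_filter; exact: count_gt_iota.
have sizeL : size L = A N by rewrite size_filter.
have B1 : B 1 = 0 by rewrite /B /= P1.
have hd : head 0 lam = B N.
  rewrite /lam; have -> : L = 1 :: filter P (iota 2 N.-1).
    by rewrite /L; case: (N) kN => //= N' _; rewrite P1.
  by rewrite /= cntR ?B1 ?subn0 //; lia.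
rewrite cntL ?cntR; try lia.
rewrite /Dk size_filter count_flatten -map_comp size_map sizeL.
set a := A k; set b := B N - B k.
have E : {in iota 1 (A N), forall i,
   ((count (fun ij => head 0 lam + ij.1 == k + ij.2)) \o
    (fun i => [seq (i, j) | j <- iota 1 (nth 0 lam i.-1)])) i
   = ((i <= a) && (a < b + i) : nat)}.
  move=> i; rewrite mem_iota => /andP[i1 iN].
  rewrite /= count_map hd.
  rewrite (@eq_count _ _ (fun j => B N + i == k + j)) // count_iota_eq.
  have iL : i.-1 < size L by rewrite sizeL; lia.
  rewrite /lam (nth_map 0) //.
  have [Pl l1 lN Al] := nth_filter_iota iL.
  set l := nth 0 L i.-1 in Pl l1 lN Al *.
  have AlE : A l = i.
    have e : l = (l.-1).+1 by lia.
    rewrite /A; have -> : iota 1 l = iota 1 l.-1 ++ iota (1 + l.-1) 1 by rewrite -iotaD addn1 -e.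
    rewrite count_cat /= add1n -e Pl.
    rewrite -subn1 Al; lia.
  rewrite cntR; last by lia.
  have le : (l <= k) = (i <= a).
    case: (leqP l k) => h.
      by apply/esym/idP; rewrite -AlE /a; exact: count_iota_mono.
    apply/esym/negbTE; rewrite -ltnNge.
    have : A k <= A (l - 1) by apply: count_iota_mono; lia.
    rewrite /a /A Al; lia.
  have BkN : B k <= B N by apply: count_iota_mono; lia.
  have BlN : B l <= B N by apply: count_iota_mono; lia.
  have ABk := AB k; have ABl := AB l.
  congr nat_of_bool; rewrite -le /b /a.
  apply/idP/idP; lia.
rewrite (proj1 (eq_in_map _ _ _) E) sumn_b2n.
have aN : a <= A N by apply: count_iota_mono; lia.
rewrite -(subnKC aN) iotaD count_cat.
rewrite (@eq_in_count _ _ (fun i => a < b + i) (iota 1 a)); last first.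
  by move=> i; rewrite mem_iota => /andP[_ h]; have -> : i <= a by lia.
rewrite (@eq_in_count _ _ pred0 (iota (1 + a) _)); last first.
  by move=> i; rewrite mem_iota => /andP[h _]; have -> : i <= a = false by apply/negbTE; lia.
by rewrite count_pred0 addn0 count_min.
Qed.
Lemma card_porbits1 (T : finType) : #|porbits (1 : {perm T})| = #|T|.
Proof.
rewrite /porbits card_imset //.
move=> x y /eqP; rewrite eq_porbit_mem => /porbitP[i ->].
by rewrite expg1n perm1.
Qed.

Lemma prod_inv n (s : seq nat) : uniq s -> all (fun i => 0 < i <= n) s ->
  #|porbits (\prod_(i <- s) sgen n i)%g| + size s = n.+1 /\
  forall j, 0 < j <= n -> j \notin s -> forall x : 'I_n.+1,
    (nat_of_ord ((\prod_(i <- s) sgen n i)%g x) < j) = (nat_of_ord x < j).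
Proof.
elim: s => [|a s IH] /=.
  by move=> _ _; rewrite big_nil card_porbits1 card_ord addn0; split => // j _ _ x; rewrite perm1.
case/andP=> as_ us /andP[ha hs].
have [IH1 IH2] := IH us hs.
set P := (\prod_(i <- s) sgen n i)%g in IH1 IH2 *.
rewrite big_cons.
have xv : nat_of_ord (inord a.-1 : 'I_n.+1) = a.-1 by rewrite inordK //; lia.
have yv : nat_of_ord (inord a : 'I_n.+1) = a by rewrite inordK //; lia.
have iterP : forall i (z : 'I_n.+1), nat_of_ord ((P ^+ i)%g z) < a = (nat_of_ord z < a).
  move=> i z; rewrite permX; elim: i => //= i IHi.
  by rewrite IH2 // ha.
split.
  have := porbits_mul_tperm P (inord a.-1) (inord a).
  have -> : (inord a.-1 : 'I_n.+1) \notin porbit P (inord a).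
    apply/negP => /porbitP[i] /(congr1 (fun z : 'I_n.+1 => nat_of_ord z < a)).
    rewrite iterP xv yv ltnn; lia.
  have -> : (inord a.-1 : 'I_n.+1) != inord a.
    by apply/negP => /eqP /(congr1 (@nat_of_ord _)); rewrite xv yv; lia.
  rewrite [sgen n a]/sgen /= -/P -muln2 => h. move: h IH1. set X := #|porbits (tperm _ _ * P)|. set Y := #|porbits P|. move=> h1 h2; lia.
move=> j hj; rewrite in_cons negb_or => /andP[ja js] x.
rewrite permM IH2 // /sgen.
case: tpermP => [->|->|//]; rewrite ?xv ?yv.
- move/eqP: ja => ja; apply/idP/idP; lia.
- move/eqP: ja => ja; apply/idP/idP; lia.
Qed.

Lemma cox_conn n (c : {perm 'I_n.+1}) : coxeter c -> forall x, fconnect c ord0 x.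
Proof.
case=> s [ps ->] x.
have us : uniq s by rewrite (perm_uniq ps) iota_uniq.
have hs : all (fun i => 0 < i <= n) s.
  apply/allP => i; rewrite (perm_mem ps) mem_iota; lia.
have [H1 _] := prod_inv us hs.
set P := (\prod_(i <- s) sgen n i)%g in H1 *.
have card1 : #|porbits P| <= 1 by rewrite (perm_size ps) size_iota in H1; lia.
have e : porbit P x = porbit P ord0.
  by apply: (card_le1_eqP card1); apply: imset_f.
have : x \in porbit P ord0 by rewrite -e porbit_id.
case/porbitP => i ->; rewrite permX; exact: fconnect_iter.
Qed.

Theorem lemma3p13 (n : nat) (c : {perm 'I_n.+1}) :
  1 <= n -> coxeter c ->
  forall k : nat, 1 <= k <= n ->
    size (Dk (lambda c) k) =
    minn (count (fun l => l <= k) (Lseq c)) (count (fun r => k < r) (Rseq c)).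
Proof.
move=> n1 cox k hk.
have conn := cox_conn cox.
have part : forall i, 1 < i <= n -> in_Rc c i = ~~ in_Lc c i.
  move=> i hi; rewrite /in_Rc /in_Lc hi /=.
  have neq : pos_in_cycle c i != pos_in_cycle c n.+1.
    apply/negP => /eqP e.
    have := iter_findex (conn (inord i.-1)).
    rewrite /pos_in_cycle in e; rewrite e iter_findex // => /(congr1 (@nat_of_ord _)).
    rewrite !inordK /=; lia.
  by case: ltngtP neq.
pose PL := fun i => (i == 1) || in_Lc c i.
have eR : Rseq c = filter (predC PL) (iota 1 n.+1).
  apply: eq_in_filter => i; rewrite mem_iota => hi /=.
  rewrite /PL.
  case: (eqVneq i 1) => [->|i1] /=.
    have -> : (1 == n.+1) = false by apply/negbTE; lia.
    by rewrite /in_Rc.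
  case: (eqVneq i n.+1) => [->|iN] /=.
    by rewrite /in_Lc ltnn andbF.
  by rewrite part //; lia.
rewrite /lambda eR.
have eL : Lseq c = filter PL (iota 1 n.+1) by [].
rewrite eL; apply: comb.
- by rewrite /PL eqxx.
- rewrite /PL /in_Lc ltnn andbF orbF; apply/negP => /eqP; lia.
- lia.
Qed.
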